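(* Let $\mathcal{P}\subset\mathbb{R}^d$ be a finite set of item vectors, $\bm{q}\in\mathbb{R}^d\setminus\{\bm{0}\}$, $k>1$ an integer, $\lambda\in[0,1]$, $\mu>0$, and assume $\langle\bm{x},\bm{y}\rangle\ge0$ for all $\bm{x},\bm{y}\in\mathcal{P}\cup\{\bm{q}\}$. Let $\mathcal{N}\subseteq\mathcal{P}$ be nonempty with center $\bm{c}=\frac{1}{|\mathcal{N}|}\sum_{\bm{p}\in\mathcal{N}}\bm{p}\neq\bm{0}$, let $\theta\in[0,\pi]$ be the angle between $\bm{c}$ and $\bm{q}$, and for each nonzero $\bm{p}\in\mathcal{N}$ let $\varphi_{\bm{p}}\in[0,\pi]$ be the angle between $\bm{p}$ and $\bm{c}$. Then for every such $\bm{p}$, every $\mathcal{S}\subseteq\mathcal{P}$, and $\Delta_f$ equal to either $\Delta_{f_{avg}}$ or $\Delta_{f_{max}}$, $$\Delta_f(\bm{p},\mathcal{S})\le\tfrac{\lambda}{k}\,\|\bm{p}\|\,\|\bm{q}\|\cos(|\theta-\varphi_{\bm{p}}|).$$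
   Context: $\Delta_{f_{avg}}(\bm{p},\mathcal{S}) = \frac{\lambda}{k}\langle\bm{p},\bm{q}\rangle - \frac{2\mu(1-\lambda)}{k(k-1)}\sum_{\bm{p}'\in\mathcal{S}}\langle\bm{p},\bm{p}'\rangle$ and $\Delta_{f_{max}}(\bm{p},\mathcal{S}) = \frac{\lambda}{k}\langle\bm{p},\bm{q}\rangle - \mu(1-\lambda)\big(\max_{\bm{p}_x\ne\bm{p}_y\in\mathcal{S}\cup\{\bm{p}\}}\langle\bm{p}_x,\bm{p}_y\rangle - \max_{\bm{p}_x\ne\bm{p}_y\in\mathcal{S}}\langle\bm{p}_x,\bm{p}_y\rangle\big)$, where a maximum over an empty collection of pairs is taken to be $0$. The set $\mathcal{N}$ plays the role of a leaf node of a ball-cone tree (BC-Tree) storing, for each item, its norm and its angle to the node center. *)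

(* Defs.v *)
From HB Require Import structures.
From mathcomp Require Import all_boot all_order all_algebra.
From mathcomp Require Import finmap.
From mathcomp Require Import all_classical all_reals all_analysis.
Set Implicit Arguments. Unset Strict Implicit. Unset Printing Implicit Defensive.
Import Order.TTheory GRing.Theory Num.Theory.
Local Open Scope ring_scope.
Local Open Scope fset_scope.

Section Defs.
Variables (R : realType) (d : nat).
Notation vec := 'rV[R]_d.

Definition dot (x y : vec) : R := \sum_(i < d) x ord0 i * y ord0 i.

Definition vnorm (x : vec) : R := Num.sqrt (dot x x).

Definition angle (x y : vec) : R := acos (dot x y / (vnorm x * vnorm y)).

Definition node_center (N : {fset vec}) : vec := (#|` N|%:R)^-1 *: \sum_(x <- N) x.

(* max_{x <> y in S} <x, y>, taken to be 0 if there is no such pair *)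
Definition maxpair (S : {fset vec}) : R :=
  match [seq dot xy.1 xy.2 | xy <- [seq (x, y) | x <- enum_fset S, y <- enum_fset S] & xy.1 != xy.2] with
  | [::] => 0
  | v :: vs => foldr Num.max v vs
  end.

Definition Delta_avg (k : nat) (lam mu : R) (q p : vec) (S : {fset vec}) : R :=
  lam / k%:R * dot p q
  - (2 * mu * (1 - lam)) / (k%:R * (k%:R - 1)) * \sum_(p' <- S) dot p p'.

Definition Delta_max (k : nat) (lam mu : R) (q p : vec) (S : {fset vec}) : R :=
  lam / k%:R * dot p q - mu * (1 - lam) * (maxpair (p |` S) - maxpair S).

End Defs.

(* Main.v *)
Require Import Defs.
From HB Require Import structures.
From mathcomp Require Import all_boot all_order all_algebra.
From mathcomp Require Import finmap.
From mathcomp Require Import all_classical all_reals all_analysis.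
From mathcomp Require Import ring lra.
Import Order.TTheory GRing.Theory Num.Theory.
Local Open Scope ring_scope.
Set Implicit Arguments. Unset Strict Implicit.


Section H.
Variables (R : realType) (d : nat).
Implicit Types x y z c : 'rV[R]_d.

Lemma dotC x y : dot x y = dot y x.
Proof. by rewrite /dot; apply eq_bigr => i _; rewrite mulrC. Qed.
Lemma dotDl x y z : dot (x + y) z = dot x z + dot y z.
Proof. by rewrite /dot -big_split; apply eq_bigr => i _; rewrite mxE mulrDl. Qed.
Lemma dotZl a x y : dot (a *: x) y = a * dot x y.
Proof. by rewrite /dot mulr_sumr; apply eq_bigr => i _; rewrite mxE mulrA. Qed.
Lemma dotBl x y z : dot (x - y) z = dot x z - dot y z.
Proof. by rewrite dotDl -scaleN1r dotZl mulN1r. Qed.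
Lemma dotBr x y z : dot z (x - y) = dot z x - dot z y.
Proof. by rewrite dotC dotBl !(dotC z). Qed.
Lemma dotZr a x y : dot y (a *: x) = a * dot y x.
Proof. by rewrite dotC dotZl dotC. Qed.
Lemma dot_ge0 x : 0 <= dot x x.
Proof. by apply: sumr_ge0 => i _; rewrite -expr2 sqr_ge0. Qed.
Lemma dot_eq0 x : dot x x = 0 -> x = 0.
Proof.
move=> /eqP; rewrite psumr_eq0 => [/allP H|i _]; last by rewrite -expr2 sqr_ge0.
apply/rowP => i; rewrite mxE.
have := H i (mem_index_enum _); rewrite -expr2 sqrf_eq0 => /eqP ->.
by []. Qed.
Lemma dot_gt0 x : x != 0 -> 0 < dot x x.
Proof. move=> hx; rewrite lt_def dot_ge0 andbT; apply/eqP => /dot_eq0 h; by rewrite h eqxx in hx. Qed.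

Lemma CS x y : dot x y ^+ 2 <= dot x x * dot y y.
Proof.
have [/dot_eq0 ->|hx] := eqVneq (dot x x) 0.
  have -> : dot 0 y = 0 by rewrite /dot big1 // => i _; rewrite mxE mul0r.
  by rewrite expr0n /= mulr_ge0 ?dot_ge0.
have xx0 : 0 < dot x x by rewrite lt_def hx dot_ge0.
set t := dot x y / dot x x.
have := dot_ge0 (y - t *: x).
rewrite dotBl !dotBr !dotZl !dotZr (dotC x y) => h.
have e : dot y y - t * dot y x - (t * dot y x - t * (t * dot x x)) = dot y y - dot y x ^+2 / dot x x.
  rewrite /t (dotC x y); field; by rewrite hx.
rewrite e subr_ge0 ler_pdivrMr // in h.
move: h; rewrite (dotC y x) mulrC; done.
Qed.

Lemma CS' x y : dot x y <= vnorm x * vnorm y.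
Proof.
rewrite /vnorm -sqrtrM ?dot_ge0 //.
apply: le_trans (ler_norm _) _.
by rewrite -sqrtr_sqr ler_wsqrtr // CS.
Qed.
End H.

Section G.
Variables (R : realType) (d : nat).
Implicit Types x y z c p q : 'rV[R]_d.

Lemma vnorm_gt0 x : x != 0 -> 0 < vnorm x.
Proof. by move=> h; rewrite /vnorm sqrtr_gt0 dot_gt0. Qed.
Lemma vnorm_sq x : vnorm x ^+ 2 = dot x x.
Proof. by rewrite /vnorm sqr_sqrtr // dot_ge0. Qed.

Lemma cos_abs (x : R) : cos `|x| = cos x.
Proof. by have [h|h] := leP 0 x; [rewrite ger0_norm | rewrite ltr0_norm ?cosN]. Qed.

Lemma ratio_bd x y : x != 0 -> y != 0 -> -1 <= dot x y / (vnorm x * vnorm y) <= 1.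
Proof.
move=> hx hy.
have X0 := vnorm_gt0 hx; have Y0 := vnorm_gt0 hy.
have h := CS x y.
have h2 : (dot x y / (vnorm x * vnorm y)) ^+ 2 <= 1.
  rewrite expr_div_n ler_pdivrMr ?mul1r; last by rewrite exprn_gt0 // mulr_gt0.
  by rewrite exprMn !vnorm_sq.
set t := dot x y / _ in h2 *; nra.
Qed.

Lemma sqrt_fact x c (s : R) : 0 < vnorm x -> 0 < vnorm c ->
  s = dot x c / (vnorm x * vnorm c) ->
  Num.sqrt (dot (x - (dot x c / vnorm c ^+ 2) *: c) (x - (dot x c / vnorm c ^+ 2) *: c))
  = vnorm x * Num.sqrt (1 - s ^+ 2).
Proof.
move=> X0 C0 ->.
rewrite !dotBl !dotBr !dotZl !dotZr -!vnorm_sq (dotC c x).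
have -> : vnorm x ^+ 2 - dot x c / vnorm c ^+ 2 * dot x c -
    (dot x c / vnorm c ^+ 2 * dot x c - dot x c / vnorm c ^+ 2 * (dot x c / vnorm c ^+ 2 * vnorm c ^+ 2))
    = vnorm x ^+ 2 * (1 - (dot x c / (vnorm x * vnorm c)) ^+ 2).
  by field; rewrite ?mulf_neq0 ?gt_eqF.
rewrite sqrtrM ?sqr_ge0 // sqrtr_sqr ger0_norm //; exact: ltW.
Qed.

Lemma geo p q c : p != 0 -> q != 0 -> c != 0 ->
  dot p q <= vnorm p * vnorm q * cos `|angle c q - angle p c|.
Proof.
move=> hp hq hc.
have P0 := vnorm_gt0 hp; have Q0 := vnorm_gt0 hq; have C0 := vnorm_gt0 hc.
rewrite cos_abs /angle cosB !acosK ?in_itv /= ?ratio_bd //.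
rewrite !sin_acos ?ratio_bd //.
set sa := dot p c / _. set sb := dot c q / _.
have := CS' (p - (dot p c / vnorm c ^+ 2) *: c) (q - (dot q c / vnorm c ^+ 2) *: c).
have E1 : vnorm (p - (dot p c / vnorm c ^+ 2) *: c) = vnorm p * Num.sqrt (1 - sa ^+ 2).
  exact: sqrt_fact.
have E2 : vnorm (q - (dot q c / vnorm c ^+ 2) *: c) = vnorm q * Num.sqrt (1 - sb ^+ 2).
  by apply: sqrt_fact => //; rewrite /sb (dotC c q) (mulrC (vnorm c)).
rewrite E1 E2.
have hq' : dot c q = dot q c by rewrite dotC.
set a := dot p c. set b := dot c q.
rewrite !dotBl !dotBr !dotZl !dotZr -!vnorm_sq -hq' -/a -/b => h.
have e : vnorm p * vnorm q * (sb * sa + Num.sqrt (1 - sb ^+ 2) * Num.sqrt (1 - sa ^+ 2))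
  = a * b / vnorm c ^+ 2 + vnorm p * Num.sqrt (1 - sa ^+ 2) * (vnorm q * Num.sqrt (1 - sb ^+ 2)).
  rewrite mulrDr; congr (_ + _); last by ring.
  by rewrite /sa /sb -/a -/b; field; rewrite ?gt_eqF.
rewrite e; move: h.
set A := dot p q; set M := _ * _ * (_ * _).
have -> : A - b / vnorm c ^+ 2 * a - (a / vnorm c ^+ 2 * b - a / vnorm c ^+ 2 * (b / vnorm c ^+ 2 * vnorm c ^+ 2))
  = A - a * b / vnorm c ^+ 2 by field; rewrite gt_eqF.
move=> h; lra.
Qed.
End G.

Section M.
Variable R : realType.

Definition ml (l : seq R) : R := match l with [::] => 0 | v :: vs => foldr Num.max v vs end.

Lemma foldr_ge (u : R) vs v : v \in u :: vs -> v <= foldr Num.max u vs.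
Proof.
elim: vs => [|w ws IH] /=; first by rewrite inE => /eqP ->.
rewrite le_max => h.
have : (v == w) || (v \in u :: ws).
  by move: h; rewrite !inE; case: (v == u); case: (v == w).
by case/orP => [/eqP->|/IH ->]; rewrite ?lexx ?orbT.
Qed.

Lemma foldr_in (u : R) vs : foldr Num.max u vs \in u :: vs.
Proof.
elim: vs => [|w ws IH] /=; first by rewrite mem_head.
rewrite /Num.max; case: ifP => _; rewrite !inE ?eqxx ?orbT //.
by move: IH; rewrite inE => /orP [->|->]; rewrite ?orbT.
Qed.

Lemma ml_le (l1 l2 : seq R) : {subset l1 <= l2} -> (forall v, v \in l2 -> 0 <= v) ->
  ml l1 <= ml l2.
Proof.
move=> sub pos.
case: l2 sub pos => [|u us] sub pos.
  by case: l1 sub => [|v vs] //= sub; have := sub v (mem_head _ _).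
case: l1 sub => [|v vs] sub /=.
  by apply: le_trans (pos u (mem_head _ _)) _; apply: foldr_ge; rewrite mem_head.
by apply: foldr_ge; apply: sub; apply: foldr_in.
Qed.
End M.

Section D.
Variables (R : realType) (d : nat).
Local Open Scope fset_scope.

Lemma maxpairE (S : {fset 'rV[R]_d}) : maxpair S = ml
  [seq dot xy.1 xy.2 | xy <- [seq (x, y) | x <- enum_fset S, y <- enum_fset S] & xy.1 != xy.2].
Proof. by []. Qed.

Lemma maxpair_le (S T : {fset 'rV[R]_d}) : S `<=` T ->
  (forall x y, x \in T -> y \in T -> 0 <= dot x y) -> maxpair S <= maxpair T.
Proof.
move=> ST pos; rewrite !maxpairE; apply: ml_le.
  move=> v /mapP [[x y]]; rewrite mem_filter /= => /andP [nxy /allpairsP [[x' y'] /= [hx hy [ex ey]]]] ->.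
  subst x' y'.
  apply/mapP; exists (x, y) => //; rewrite mem_filter /= nxy /=.
  by apply/allpairsP; exists (x, y) => /=; split => //; apply: (fsubsetP ST).
move=> v /mapP [[x y]]; rewrite mem_filter /= => /andP [_ /allpairsP [[x' y'] /= [hx hy [ex ey]]]] ->.
by subst x' y'; apply: pos.
Qed.
End D.

Local Open Scope fset_scope.

Theorem theorem5 (R : realType) (d : nat) (P : {fset 'rV[R]_d}) (q : 'rV[R]_d)
  (k : nat) (lam mu : R)
  (hq : q != 0) (hk : (1 < k)%N) (hlam : 0 <= lam <= 1) (hmu : 0 < mu)
  (hnn : forall x y, x \in q |` P -> y \in q |` P -> 0 <= dot x y)
  (N : {fset 'rV[R]_d}) (hNP : N `<=` P) (hN0 : N != fset0)
  (hc : node_center N != 0)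
  (p : 'rV[R]_d) (hpN : p \in N) (hp0 : p != 0)
  (S : {fset 'rV[R]_d}) (hSP : S `<=` P) :
  let theta := angle (node_center N) q in
  let phi := angle p (node_center N) in
  let bound := lam / k%:R * vnorm p * vnorm q * cos `|theta - phi| in
  Delta_avg k lam mu q p S <= bound /\ Delta_max k lam mu q p S <= bound.
Proof.
move=> theta phi bound.
have key := geo hp0 hq hc.
have k1 : (1 < k%:R :> R) by rewrite ltr1n.
have lk : 0 <= lam / k%:R by apply: divr_ge0; [case/andP: hlam | lra].
have hb : lam / k%:R * dot p q <= bound.
  have -> : bound = lam / k%:R * (vnorm p * vnorm q * cos `|theta - phi|) by rewrite /bound !mulrA.
  exact: ler_wpM2l.
have inP : forall x, x \in P -> x \in q |` P by move=> x hx; rewrite !inE hx orbT.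
have pP : p \in P by apply: (fsubsetP hNP).
split.
  apply: le_trans hb; rewrite /Delta_avg lerBlDr lerDl.
  apply: mulr_ge0.
    apply: divr_ge0; last by apply: mulr_ge0; lra.
    by apply: mulr_ge0; [apply: mulr_ge0; lra | case/andP: hlam => _; lra].
  rewrite big_seq; apply: sumr_ge0 => x hx; apply: hnn; first exact: inP.
  by apply: inP; apply: (fsubsetP hSP).
apply: le_trans hb; rewrite /Delta_max lerBlDr lerDl.
apply: mulr_ge0; first by apply: mulr_ge0; [lra | case/andP: hlam => _; lra].
rewrite subr_ge0; apply: maxpair_le; first exact: fsubsetU1.
move=> x y; rewrite !inE => /orP [/eqP->|hx] /orP [/eqP->|hy]; apply: hnn; apply: inP => //;
  exact: (fsubsetP hSP).
Qed.
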